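(* Consider the coupled oscillator model $\dot\theta_i=\omega_i-\sum_{j=1}^n a_{ij}\sin(\theta_i-\theta_j)$, $i=1,\dots,n$, with $\omega\in\mathbf 1_n^\perp$, on a connected weighted undirected graph $G=(V,E)$ with symmetric weights $a_{ij}=a_{ji}>0$ for $\{i,j\}\in E$ and $a_{ij}=0$ otherwise. If a solution $\theta(t)$ satisfies $\theta(t)\in\Delta^G(\gamma)$ for all $t\ge0$, for some $\gamma<\pi/2$, then there exists an equilibrium $\theta^*\in\Delta^G(\gamma)$ and $\theta(t)$ achieves exponential frequency synchronization, converging to $[\theta^*]$.
   Context: $\mathbf 1_n^\perp$ is the set of vectors orthogonal to $\mathbf 1_n$. For $\gamma\in[0,\pi]$, $\Delta^G(\gamma)=\{\theta\in\mathbb T^n: |\theta_i-\theta_j|\le\gamma\text{ for all edges }\{i,j\}\in E\}$. For an equilibrium $\theta^*$, $[\theta^*]=\{\theta^*+c\mathbf 1_n: c\in\mathbb R\}$. Exponential frequency synchronization means $\dot\theta_i(t)-\dot\theta_j(t)\to0$ exponentially fast for all $i,j$. *)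

(* Defs.v *)
From HB Require Import structures.
From mathcomp Require Import all_boot all_order all_algebra.
From mathcomp Require Import all_classical all_reals all_analysis.
Set Implicit Arguments. Unset Strict Implicit. Unset Printing Implicit Defensive.
Import Order.TTheory GRing.Theory Num.Theory.
Local Open Scope ring_scope.

Definition kuramoto_rhs (R : realType) (n : nat) (a : 'I_n -> 'I_n -> R)
  (omega : 'I_n -> R) (x : 'I_n -> R) (i : 'I_n) : R :=
  omega i - \sum_(j < n) a i j * sin (x i - x j).

Definition edge_rel (R : realType) (n : nat) (a : 'I_n -> 'I_n -> R) : rel 'I_n :=
  fun i j => 0 < a i j.

(* Geodesic distance on the circle between the angles x and y (mod 2pi)
   is at most g. *)
Definition circ_le (R : realType) (x y g : R) : Prop :=
  exists k : int, `|x - y - k%:~R * (2 * pi)| <= g.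

Definition circ_lt (R : realType) (x y e : R) : Prop :=
  exists k : int, `|x - y - k%:~R * (2 * pi)| < e.

Definition DeltaG (R : realType) (n : nat) (a : 'I_n -> 'I_n -> R) (g : R)
  (x : 'I_n -> R) : Prop :=
  forall i j : 'I_n, edge_rel a i j -> circ_le (x i) (x j) g.

Definition is_equilibrium (R : realType) (n : nat) (a : 'I_n -> 'I_n -> R)
  (omega : 'I_n -> R) (x : 'I_n -> R) : Prop :=
  forall i, kuramoto_rhs a omega x i = 0.

(* theta(t) converges (in T^n) to the set [x] = {x + c 1_n : c in R}:
   the distance from theta(t) to [x] tends to 0. *)
Definition converges_to_class (R : realType) (n : nat) (theta : R -> 'I_n -> R)
  (x : 'I_n -> R) : Prop :=
  forall e : R, 0 < e -> exists T : R, forall t : R, T <= t ->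
    exists c : R, forall i : 'I_n, circ_lt (theta t i) (x i + c) e.

(* Main.v *)
Require Import Defs.
From HB Require Import structures.
From mathcomp Require Import all_boot all_order all_algebra.
From mathcomp Require Import all_classical all_reals all_analysis.
From mathcomp Require Import lra ring zify.
Import Order.TTheory GRing.Theory Num.Theory.
Local Open Scope ring_scope.
Local Open Scope classical_set_scope.

Section Helpers.
Context {R : realType}.

Lemma isd_der {x : R} {f : R -> R} {df : R} : is_derive x 1 f df -> derivable f x 1.
Proof. by move=> H; exact: (@ex_derive _ _ _ _ _ _ _ H). Qed.

Lemma nincr_deriv (f df : R -> R) (a : R) :
  (forall x, a < x -> is_derive x 1 f (df x)) ->
  (forall x, a < x -> df x <= 0) ->
  forall x y, a < x -> x <= y -> f y <= f x.
Proof.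
move=> Hd Hn x y ax xy.
have Hi : forall z, x <= z -> is_derive z 1 f (df z).
  by move=> z xz; apply: Hd; exact: (lt_le_trans ax xz).
apply: (@ler0_derive1_nincr R f x y) => //.
- move=> z; rewrite in_itv /= => /andP[xz _]; exact: isd_der (Hi z (ltW xz)).
- move=> z; rewrite in_itv /= => /andP[xz _].
  have Hz := Hi z (ltW xz); rewrite derive1E (@derive_val _ _ _ _ _ _ _ Hz); apply: Hn.
  exact: (lt_trans ax xz).
- apply: derivable_within_continuous => z; rewrite in_itv /= => /andP[xz _].
  exact: isd_der (Hi z xz).
Qed.

Lemma is_derive_lin (mu t : R) : is_derive t 1 (fun s => - (mu * s)) (- mu).
Proof.
by apply: is_derive_eq; rewrite [X in - X = _]/GRing.scale /= mulr1.
Qed.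

Lemma is_derive_expl (c mu t : R) :
  is_derive t 1 (fun s => c * expR (- (mu * s))) (- (c * mu) * expR (- (mu * t))).
Proof.
have H := @is_derive1_comp R expR (fun s => - (mu * s)) t _ _ (is_derive_expR _) (is_derive_lin mu t).
have H2 := @is_deriveZ R R R _ c t 1 _ H.
apply: is_derive_eq.
by rewrite /GRing.scale /=; ring.
Qed.

Lemma exp_conv (g dg : R -> R) (D mu : R) : 0 < mu ->
  (forall t : R, 0 < t -> is_derive t 1 g (dg t)) ->
  (forall t : R, 0 < t -> `|dg t| <= D * expR (- (mu * t))) ->
  exists L, forall t : R, 0 < t -> `|g t - L| <= (D / mu) * expR (- (mu * t)).
Proof.
move=> mu0 Hg Hb.
set e := fun s => (D / mu) * expR (- (mu * s)).
have He : forall t : R, is_derive t 1 e (- D * expR (- (mu * t))).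
  move=> t; have H := is_derive_expl (D / mu) mu t.
  have E : - (D / mu * mu) * expR (- (mu * t)) = - D * expR (- (mu * t)).
    by rewrite divfK ?gt_eqF.
  by rewrite -E.
set phi := fun s => g s + e s.
set psi := fun s => - (g s - e s).
have Hphi : forall x y, 0 < x -> x <= y -> phi y <= phi x.
  apply: (@nincr_deriv phi (fun t => dg t + - D * expR (- (mu * t)))).
    by move=> t t0; exact: (is_deriveD (Hg t t0) (He t)).
  move=> t t0; have := Hb t t0; have := ler_norm (dg t).
  rewrite mulNr; lra.
have Hpsi : forall x y, 0 < x -> x <= y -> psi y <= psi x.
  apply: (@nincr_deriv psi (fun t => - (dg t - - D * expR (- (mu * t))))).
    by move=> t t0; exact: (is_deriveN (is_deriveB (Hg t t0) (He t))).
  move=> t t0; have := Hb t t0; have := ler_norm (- dg t).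
  rewrite normrN mulNr; lra.
have D0 : 0 <= D.
  have h3 := Hb 1 ltr01; have h2 := expR_gt0 (- (mu * 1)).
  have h1 := normr_ge0 (dg 1).
  by have := le_trans h1 h3; rewrite pmulr_lge0.
have e0 : forall t, 0 <= e t.
  move=> t; rewrite /e; apply: mulr_ge0; last exact: ltW (expR_gt0 _).
  by apply: divr_ge0 => //; exact: ltW.
have Hle : forall s t, 0 < s -> 0 < t -> - psi s <= phi t.
  move=> s t s0 t0; case: (leP s t) => st.
    have := Hpsi s t s0 st; have := e0 t; rewrite /psi /phi; lra.
  have := Hphi t s t0 (ltW st); have := e0 s; rewrite /psi /phi; lra.
set A := [set - psi t | t in [set t : R | 0 < t]].
have A0 : A !=set0 by exists (- psi 1); exists 1 => //; exact: ltr01.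
have Aub : has_ubound A.
  by exists (phi 1) => y [s s0 <-]; apply: Hle => //; exact: ltr01.
exists (sup A) => t t0.
have h1 : - psi t <= sup A by apply: ub_le_sup => //; exists t.
have h2 : sup A <= phi t by apply: ge_sup => // y [s s0 <-]; exact: Hle.
rewrite ler_norml; move: h1 h2; rewrite /psi /phi -/(e t); lra.
Qed.
Lemma sin_lip (x y : R) : `|sin x - sin y| <= `|x - y|.
Proof.
wlog xy : x y / y <= x.
  move=> W; case: (leP y x) => [|/ltW yx]; first exact: W.
  by rewrite distrC (distrC x); exact: W.
have [c _ ->] := @MVT_segment R sin cos y x xy (fun z _ => is_derive_sin z)
  (derivable_within_continuous (fun z _ => isd_der (is_derive_sin z))).
rewrite normrM ler_piMl //.
by rewrite ler_norml cos_le1 cos_geN1.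
Qed.

Lemma cos_shift (z : R) (k : int) : cos (z + k%:~R * (2 * pi)) = cos z.
Proof.
have P := @cosD2pi R.
have E : forall m : nat, m%:R * (2 * pi) = (pi *+ 2) *+ m :> R.
  by move=> m; rewrite mulr_natl mulr_natl.
case: k => m.
  by rewrite -[Posz m]/(m%:Z) pmulrn E (periodicn P).
rewrite NegzE mulrNz -[(- (m.+1)%:R)]/(- (m.+1)%:R : R) mulNr E.
by rewrite -{2}[z](subrK ((pi *+ 2) *+ m.+1)) (periodicn P).
Qed.

Lemma cos_circ (x y g : R) : 0 <= g -> g < pi / 2 -> circ_le x y g -> cos g <= cos (x - y).
Proof.
move=> g0 gp [k Hk].
have -> : cos (x - y) = cos (x - y - k%:~R * (2 * pi)).
  by rewrite -(cos_shift (x - y - k%:~R * (2 * pi)) k) subrK.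
set w := x - y - _ in Hk *.
have pi0 : 0 < pi :> R := pi_gt0 R.
have gpi : g <= pi by apply: ltW; apply: (lt_le_trans gp); rewrite ler_pdivrMr // ler_peMr //; lra.
have -> : cos w = cos `|w| by case: (ger0P w) => _ //; rewrite cosN.
rewrite leNgt ltr_cos ?in_itv /= ?g0 ?gpi ?normr_ge0 ?(le_trans Hk) //.
by rewrite -leNgt.
Qed.

Definition Qf (n : nat) (a : 'I_n -> 'I_n -> R) (x : 'I_n -> R) : R :=
  \sum_(i < n) \sum_(j < n) a i j * (x i - x j) ^+ 2.

Arguments Qf {n}.

Lemma Qf_ge0 n (a : 'I_n -> 'I_n -> R) x : (forall i j, 0 <= a i j) -> 0 <= Qf a x.
Proof. by move=> H; apply: sumr_ge0 => i _; apply: sumr_ge0 => j _; rewrite mulr_ge0 ?sqr_ge0. Qed.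

Lemma term_le_Q n (a : 'I_n -> 'I_n -> R) x u v : (forall i j, 0 <= a i j) ->
  a u v * (x u - x v) ^+ 2 <= Qf a x.
Proof.
move=> H; rewrite /Qf (bigD1 u) //= (bigD1 v) //= -addrA lerDl.
apply: addr_ge0; first by apply: sumr_ge0 => j _; rewrite mulr_ge0 ?sqr_ge0.
by apply: sumr_ge0 => i _; apply: sumr_ge0 => j _; rewrite mulr_ge0 ?sqr_ge0.
Qed.

Lemma pair_bound n (a : 'I_n -> 'I_n -> R) i j : (forall i j, 0 <= a i j) ->
  connect (edge_rel a) i j -> exists K, 0 <= K /\ forall x, (x i - x j) ^+ 2 <= K * Qf a x.
Proof.
move=> H /connectP [p Hp ->].
have base : exists K, 0 <= K /\ forall x, (x i - x i) ^+ 2 <= K * Qf a x.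
  by exists 0; split => // x; rewrite subrr expr0n /= mul0r.
have gen : forall u, path (edge_rel a) u p ->
  (exists K, 0 <= K /\ forall x, (x i - x u) ^+ 2 <= K * Qf a x) ->
  exists K, 0 <= K /\ forall x, (x i - x (last u p)) ^+ 2 <= K * Qf a x.
  2: by apply: gen.
elim: p {Hp} => [|v p IH] u /=; first by [].
move=> /andP [euv Hp] [K [K0 HK]]; apply: IH => //.
have av : 0 < a u v := euv.
exists (2 * K + 2 / a u v); split.
  by apply: addr_ge0; [apply: mulr_ge0 | apply: divr_ge0; rewrite ?ltW].
move=> x; have h1 := HK x; have q0 := @Qf_ge0 n a x H.
have h2 : (x u - x v) ^+ 2 <= (a u v)^-1 * Qf a x.
  rewrite -(ler_pM2l av) mulVKf ?gt_eqF //; exact: term_le_Q.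
have h3 : (x i - x v) ^+ 2 <= 2 * (x i - x u) ^+ 2 + 2 * (x u - x v) ^+ 2.
  have -> : x i - x v = (x i - x u) + (x u - x v) by rewrite addrA subrK.
  set A := x i - x u; set B := x u - x v.
  have := sqr_ge0 (A - B); rewrite !expr2; lra.
rewrite mulrDl -(mulrA 2 K) -(mulrA 2 (a u v)^-1).
move: h1 h2 h3; set P := K * _; set P2 := _^-1 * _; lra.
Qed.

Lemma pointwise n (x : 'I_n -> R) i : \sum_(j < n) x j = 0 ->
  x i ^+ 2 <= \sum_(j < n) (x i - x j) ^+ 2.
Proof.
move=> hx.
rewrite (eq_bigr (fun j => (x i ^+ 2 + x j ^+ 2) - (2 * x i) * x j)); last first.
  by move=> j _; rewrite sqrrB mulr2n -mulrA mulr_natl; lra.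
have E2 : \sum_(j < n) 2 * x i * x j = 2 * x i * \sum_(j < n) x j by rewrite mulr_sumr.
rewrite sumrB big_split /= E2 hx mulr0 subr0 sumr_const card_ord.
have : 0 <= \sum_(j < n) x j ^+ 2 by apply: sumr_ge0 => j _; exact: sqr_ge0.
have : x i ^+ 2 <= x i ^+ 2 *+ n.
  clear E2; case: n x i hx => [|m] x [k hk] //= _; rewrite mulrSr lerDr; exact: mulrn_wge0 (sqr_ge0 _).
lra.
Qed.

Lemma poincare n (a : 'I_n -> 'I_n -> R) : (forall i j, 0 <= a i j) ->
  (forall i j, connect (edge_rel a) i j) ->
  exists K, 0 < K /\ forall x, \sum_(i < n) x i = 0 ->
    \sum_(i < n) x i ^+ 2 <= K * Qf a x.
Proof.
move=> H C.
have : forall ij : 'I_n * 'I_n, exists K, 0 <= K /\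
   forall x, (x ij.1 - x ij.2) ^+ 2 <= K * Qf a x.
  by move=> [i j]; apply: pair_bound.
case/choice => Kf HKf.
have S0 : 0 <= \sum_(i < n) \sum_(j < n) Kf (i, j).
  by apply: sumr_ge0 => i _; apply: sumr_ge0 => j _; case: (HKf (i, j)).
exists (1 + \sum_(i < n) \sum_(j < n) Kf (i, j)); split; first lra.
move=> x hx.
have q0 := @Qf_ge0 n a x H.
apply: (@le_trans _ _ (\sum_(i < n) \sum_(j < n) Kf (i, j) * Qf a x)).
  apply: ler_sum => i _; apply: (le_trans (@pointwise n x i hx)).
  apply: ler_sum => j _; by case: (HKf (i, j)) => _ /(_ x).
rewrite (eq_bigr (fun i => (\sum_(j < n) Kf (i, j)) * Qf a x)); last first.
  by move=> i _; rewrite mulr_suml.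
rewrite -mulr_suml mulrDl mul1r lerDr //.
Qed.


Lemma exp_small (K mu eps : R) : 0 < mu -> 0 < eps ->
  exists T, 0 < T /\ forall t, T <= t -> K * expR (- (mu * t)) < eps.
Proof.
move=> mu0 e0; case: (leP K 0) => K0.
  exists 1; split => // t _; apply: (le_lt_trans _ e0).
  by rewrite mulr_le0_ge0 // ltW // expR_gt0.
set T := (1 + `|ln (K / eps)|) / mu.
have T0 : 0 < T by rewrite divr_gt0 // ltr_pwDl.
exists T; split => // t Tt.
have h1 : ln (K / eps) < mu * t.
  have : mu * T <= mu * t by rewrite ler_pM2l.
  rewrite /T mulrC divfK ?gt_eqF //.
  have := ler_norm (ln (K / eps)); lra.
have Ke : 0 < K / eps by rewrite divr_gt0.
have : expR (- (mu * t)) < expR (- ln (K / eps)) by rewrite ltr_expR ltrN2.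
rewrite (expRN (ln (K / eps))) lnK ?posrE // invf_div => h2.
by rewrite -(ltr_pM2l K0) mulrCA divff ?gt_eqF // mulr1 in h2.
Qed.

Lemma exp_le (x y K mu T : R) : 0 < mu ->
  (forall t, T <= t -> x <= y + K * expR (- (mu * t))) -> x <= y.
Proof.
move=> mu0 H; rewrite leNgt; apply/negP => yx.
have e0 : 0 < x - y by rewrite subr_gt0.
have [T' [_ HT']] := exp_small K mu (x - y) mu0 e0.
have h1 := HT' (Num.max T T') ltac:(by rewrite le_max lexx orbT).
have h2 := H (Num.max T T') ltac:(by rewrite le_max lexx).
lra.
Qed.

Lemma is_derive_sumf n (h : 'I_n -> R -> R) (dh : 'I_n -> R) (t : R) :
  (forall j, is_derive t 1 (h j) (dh j)) ->
  is_derive t 1 (fun s => \sum_(j < n) h j s) (\sum_(j < n) dh j).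
Proof. by move=> H; have := is_derive_sum H; rewrite fct_sumE. Qed.


Lemma anti_sum n (u : 'I_n -> 'I_n -> R) : (forall i j, u i j = - u j i) ->
  \sum_(i < n) \sum_(j < n) u i j = 0.
Proof.
move=> H.
have E : \sum_(i < n) \sum_(j < n) u i j = - \sum_(i < n) \sum_(j < n) u i j.
  rewrite {1}exchange_big /= -sumrN; apply: eq_bigr => j _.
  rewrite -sumrN; apply: eq_bigr => i _; exact: H.
move: E; set S := \sum_(i < n) _; lra.
Qed.

Lemma sym_sum n (w : 'I_n -> 'I_n -> R) (v : 'I_n -> R) : (forall i j, w i j = w j i) ->
  \sum_(i < n) (2 * v i) * (\sum_(j < n) w i j * (v i - v j)) =
  \sum_(i < n) \sum_(j < n) w i j * (v i - v j) ^+ 2.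
Proof.
move=> H.
set F := fun i j => w i j * (v i * (v i - v j)).
have L : \sum_(i < n) (2 * v i) * (\sum_(j < n) w i j * (v i - v j)) =
   \sum_(i < n) \sum_(j < n) F i j + \sum_(i < n) \sum_(j < n) F i j.
  rewrite -big_split /=; apply: eq_bigr => i _; rewrite -big_split mulr_sumr /=.
  by apply: eq_bigr => j _; rewrite /F; ring.
have Rr : \sum_(i < n) \sum_(j < n) w i j * (v i - v j) ^+ 2 =
   \sum_(i < n) \sum_(j < n) F i j + \sum_(i < n) \sum_(j < n) F j i.
  rewrite -big_split /=; apply: eq_bigr => i _; rewrite -big_split /=.
  by apply: eq_bigr => j _; rewrite /F (H j i); ring.
rewrite L Rr; congr (_ + _).
by rewrite exchange_big.
Qed.

Lemma term_le_sum n (F : 'I_n -> R) i : (forall k, 0 <= F k) -> F i <= \sum_(k < n) F k.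
Proof. by move=> H; rewrite (bigD1 i) //= lerDl; apply: sumr_ge0 => k _; exact: H. Qed.

Lemma int_close (k k' : int) : `|(k%:~R - k'%:~R : R)| < 1 -> k = k'.
Proof.
rewrite -intrB -intr_norm -[1 : R]/(1%:~R) ltr_int => H.
apply/eqP; rewrite -subr_eq0 -normr_eq0; move: H.
have := normr_ge0 (k - k'); set m := `|k - k'|; lia.
Qed.
End Helpers.
Arguments Qf {R n}.

Local Close Scope classical_set_scope.

Theorem mainTheorem7 (R : realType) (n : nat) (a : 'I_n -> 'I_n -> R)
  (omega : 'I_n -> R) (theta : R -> 'I_n -> R) (gamma : R) :
  (forall i j, a i j = a j i) ->
  (forall i j, 0 <= a i j) ->
  (forall i j, connect (edge_rel a) i j) ->
  \sum_(i < n) omega i = 0 ->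
  0 <= gamma -> gamma < pi / 2 ->
  (forall t : R, 0 < t -> forall i : 'I_n,
      is_derive t 1 (fun s => theta s i) (kuramoto_rhs a omega (theta t) i)) ->
  (forall t : R, 0 <= t -> DeltaG a gamma (theta t)) ->
  exists thstar : 'I_n -> R,
    [/\ is_equilibrium a omega thstar,
        DeltaG a gamma thstar,
        (exists C lam : R, 0 < lam /\
           forall t : R, 0 < t -> forall i j : 'I_n,
             `|derive1 (fun s => theta s i) t - derive1 (fun s => theta s j) t|
               <= C * expR (- (lam * t)))
      & converges_to_class theta thstar].
Proof.
move=> asym a0 conn som g0 gpi Hd HD.
set nu := fun s i => kuramoto_rhs a omega (theta s) i.
have pi0 : 0 < pi :> R := pi_gt0 R.
have cg0 : 0 < cos gamma.
  apply: cos_gt0_pihalf; rewrite gpi andbT; apply: (lt_le_trans _ g0).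
  by rewrite oppr_lt0 divr_gt0.
have Hnu : forall t : R, 0 < t -> forall i, is_derive t 1 (fun s => nu s i)
   (- \sum_(j < n) a i j * (cos (theta t i - theta t j) * (nu t i - nu t j))).
  move=> t t0 i.
  have Hs : forall j, is_derive t 1 (fun s => a i j * sin (theta s i - theta s j))
      (a i j * (cos (theta t i - theta t j) * (nu t i - nu t j))).
    move=> j.
    have hsub : is_derive t 1 (fun s => theta s i - theta s j) (nu t i - nu t j).
      exact: (is_deriveB (Hd t t0 i) (Hd t t0 j)).
    have hsin := @is_derive1_comp R sin (fun s => theta s i - theta s j) t _ _
       (is_derive_sin _) hsub.
    exact: (is_deriveZ (a i j) hsin).
  have := is_deriveB (is_derive_cst (omega i) t 1) (@is_derive_sumf R n _ _ t Hs).
  by rewrite sub0r.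
have Snu : forall s, \sum_(i < n) nu s i = 0.
  move=> s; rewrite /nu /kuramoto_rhs sumrB som anti_sum ?subr0 // => i j.
  by rewrite asym -mulrN -sinN opprB.
have [K [K0 HK]] := @poincare R n a a0 conn.
set lam := cos gamma / K.
have lam0 : 0 < lam by rewrite divr_gt0.
set V := fun s => \sum_(i < n) nu s i ^+ 2.
set w := fun t i j => a i j * cos (theta t i - theta t j).
set dV := fun t => - \sum_(i < n) \sum_(j < n) w t i j * (nu t i - nu t j) ^+ 2.
have HV : forall t : R, 0 < t -> is_derive t 1 V (dV t).
  move=> t t0.
  have Hi : forall i, is_derive t 1 (fun s => nu s i ^+ 2)
     ((2 * nu t i) * (- \sum_(j < n) w t i j * (nu t i - nu t j))).
    move=> i; have H := is_deriveX 2 (Hnu t t0 i).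
    apply: is_derive_eq; rewrite [X in X = _]/GRing.scale /= expr1.
    by congr (_ * - _); apply: eq_bigr => j _; rewrite /w mulrA.
  have H := @is_derive_sumf R n _ _ t Hi.
  apply: is_derive_eq; rewrite /dV -sym_sum; last first.
    by move=> i j; rewrite /w asym -cosN opprB.
  by rewrite -sumrN; apply: eq_bigr => i _; rewrite mulrN.
have dVle : forall t : R, 0 < t -> dV t <= - (lam * V t).
  move=> t t0.
  have h1 : cos gamma * Qf a (nu t) <=
      \sum_(i < n) \sum_(j < n) w t i j * (nu t i - nu t j) ^+ 2.
    rewrite /Qf mulr_sumr; apply: ler_sum => i _; rewrite mulr_sumr.
    apply: ler_sum => j _; rewrite mulrA [cos gamma * a i j]mulrC /w.
    apply: ler_wpM2r; first exact: sqr_ge0.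
    have := a0 i j; rewrite le_eqVlt => /orP [/eqP <-|ap]; first by rewrite !mul0r.
    apply: ler_wpM2l; first exact: ltW.
    exact: cos_circ g0 gpi (HD t (ltW t0) i j ap).
  have h2 : V t <= K * Qf a (nu t) := HK (nu t) (Snu t).
  have h3 : lam * V t <= cos gamma * Qf a (nu t).
    rewrite /lam mulrAC -mulrA (ler_pM2l cg0) ler_pdivrMr // mulrC.
    exact: h2.
  rewrite /dV /= lerN2; exact: le_trans h3 h1.
set E := fun s : R => 1 * expR (- ((- lam) * s)).
have EE : forall s, E s = expR (lam * s) by move=> s; rewrite /E mul1r mulNr opprK.
have Vb : forall t, 1 <= t -> V t <= (V 1 * expR lam) * expR (- (lam * t)).
  move=> t t1.
  have := @nincr_deriv R (fun s => V s * E s)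
    (fun s => V s * (- (1 * - lam) * expR (- (- lam * s))) + E s * dV s) 0.
  move=> /(_ _ _ 1 t ltr01 t1).
  have V0 : 0 <= V t by apply: sumr_ge0 => i _; exact: sqr_ge0.
  rewrite !EE mulr1 => H.
  have -> : V t = V t * expR (lam * t) * expR (- (lam * t)).
    by rewrite -mulrA expRxMexpNx_1 mulr1.
  rewrite ler_pM2r ?expR_gt0 //; apply: H.
  - move=> x x0; apply: is_deriveM; first exact: HV.
    exact: is_derive_expl.
  - move=> x x0; rewrite EE mul1r opprK mulNr opprK.
    have -> : V x * (lam * expR (lam * x)) + expR (lam * x) * dV x =
      expR (lam * x) * (lam * V x + dV x) by ring.
    rewrite pmulr_rle0 ?expR_gt0 //.
    have := dVle x x0; lra.
set B := \sum_(i < n) (`|omega i| + \sum_(j < n) a i j).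
have Bb : forall t i, `|nu t i| <= B.
  move=> t i; apply: (@le_trans _ _ (`|omega i| + \sum_(j < n) a i j)).
    rewrite /nu /kuramoto_rhs; apply: (le_trans (ler_normB _ _)); rewrite lerD2l.
    apply: (le_trans (ler_norm_sum _ _ _)); apply: ler_sum => j _.
    rewrite normrM ger0_norm // ler_piMr //.
    by rewrite ler_norml sin_le1 sin_geN1.
  apply: (@term_le_sum R n (fun k => `|omega k| + \sum_(j < n) a k j)) => k.
  by apply: addr_ge0 => //; apply: sumr_ge0.
set mu := lam / 2.
have mu0 : 0 < mu by rewrite divr_gt0.
set M := V 1 * expR lam.
have M0 : 0 <= M.
  apply: mulr_ge0; last exact: ltW (expR_gt0 _).
  by apply: sumr_ge0 => i _; exact: sqr_ge0.
have B0 : 0 <= B.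
  by apply: sumr_ge0 => i _; apply: addr_ge0 => //; apply: sumr_ge0.
set D := (1 + M) + B * expR mu.
have Dnu : forall t, 0 < t -> forall i, `|nu t i| <= D * expR (- (mu * t)).
  move=> t t0 i.
  have e0 := expR_gt0 (- (mu * t)).
  case: (leP 1 t) => t1.
    have h1 : nu t i ^+ 2 <= M * expR (- (lam * t)).
      apply: le_trans (Vb t t1).
      exact: (@term_le_sum R n (fun k => nu t k ^+ 2) i (fun k => sqr_ge0 _)).
    have h2 : `|nu t i| <= (1 + M) * expR (- (mu * t)).
      have y0 : 0 <= (1 + M) * expR (- (mu * t)).
        by apply: mulr_ge0; [lra | exact: ltW].
      rewrite -(@ler_pXn2r R 2) ?nnegrE ?normr_ge0 //.
      rewrite real_normK ?num_real // exprMn [expR _ ^+ 2]expr2 -expRD.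
      have -> : - (mu * t) + - (mu * t) = - (lam * t) by rewrite /mu; field.
      apply: (le_trans h1); rewrite ler_pM2r ?expR_gt0 //.
      have := sqr_ge0 M; rewrite !expr2; lra.
    apply: (le_trans h2); rewrite ler_pM2r // /D lerDl.
    by apply: mulr_ge0 => //; apply: ltW; apply: expR_gt0.
  have h1 : 1 <= expR mu * expR (- (mu * t)).
    rewrite -expRD -expR0 ler_expR; have : mu * t <= mu * 1 by rewrite ler_pM2l // ltW.
    lra.
  apply: (le_trans (Bb t i)); rewrite /D mulrDl.
  have : B <= B * expR mu * expR (- (mu * t)).
    by rewrite -mulrA; apply: ler_peMr.
  have : 0 <= (1 + M) * expR (- (mu * t)) by apply: mulr_ge0; [lra | exact: ltW].
  lra.
have d1 : forall t, 0 < t -> forall i, derive1 (fun s => theta s i) t = nu t i.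
  by move=> t t0 i; rewrite derive1E (@derive_val _ _ _ _ _ _ _ (Hd t t0 i)).
set Eb := fun t => (D / mu) * expR (- (mu * t)).
have /choice [L HL] : forall i, exists Li, forall t : R, 0 < t ->
    `|theta t i - Li| <= Eb t.
  move=> i; apply: (@exp_conv R (fun s => theta s i) (fun s => nu s i) D mu mu0).
    by move=> t t0; exact: Hd.
  by move=> t t0; exact: Dnu.
have Eb0 : forall t, 0 <= Eb t.
  move=> t; rewrite /Eb; apply: mulr_ge0; last exact: ltW (expR_gt0 _).
  apply: divr_ge0; last exact: ltW.
  by rewrite /D; apply: addr_ge0; [lra | apply: mulr_ge0 => //; exact: ltW (expR_gt0 _)].
have Hdiff : forall t, 0 < t -> forall i j,
    `|(theta t i - theta t j) - (L i - L j)| <= 2 * Eb t.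
  move=> t t0 i j.
  have -> : (theta t i - theta t j) - (L i - L j) =
     (theta t i - L i) - (theta t j - L j) by ring.
  apply: (le_trans (ler_normB _ _)); have := HL i t t0; have := HL j t t0; lra.
exists L; split.
- move=> i; apply/eqP; rewrite -normr_le0.
  apply: (@exp_le R _ 0 (D + \sum_(j < n) a i j * (2 * (D / mu))) mu 1 mu0) => t t1.
  have t0 : 0 < t := lt_le_trans ltr01 t1.
  rewrite add0r.
  have E1 : kuramoto_rhs a omega L i = nu t i +
      \sum_(j < n) a i j * (sin (theta t i - theta t j) - sin (L i - L j)).
    rewrite /nu /kuramoto_rhs.
    have S : \sum_(j < n) a i j * (sin (theta t i - theta t j) - sin (L i - L j)) =
      \sum_(j < n) a i j * sin (theta t i - theta t j) -
      \sum_(j < n) a i j * sin (L i - L j).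
      by rewrite -sumrB; apply: eq_bigr => j _; rewrite mulrBr.
    rewrite S; ring.
  rewrite E1; apply: (le_trans (ler_normD _ _)).
  have h2 : `|\sum_(j < n) a i j * (sin (theta t i - theta t j) - sin (L i - L j))|
      <= \sum_(j < n) a i j * (2 * (D / mu)) * expR (- (mu * t)).
    apply: (le_trans (ler_norm_sum _ _ _)); apply: ler_sum => j _.
    rewrite normrM ger0_norm // -mulrA ler_wpM2l //.
    apply: (le_trans (sin_lip _ _)); apply: (le_trans (Hdiff t t0 i j)).
    by rewrite /Eb mulrA.
  rewrite mulrDl; apply: lerD; first exact: Dnu.
  by apply: (le_trans h2); rewrite mulr_suml.
- move=> i j ep.
  set d := L i - L j.
  have pi2 : 0 < pi / 2 :> R by rewrite divr_gt0.
  have [T1 [T10 HT1]] := exp_small (2 * (D / mu)) mu (pi / 2) mu0 pi2.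
  have Hk : forall t, 0 < t -> exists k : int,
      `|d - k%:~R * (2 * pi)| <= gamma + 2 * Eb t.
    move=> t t0; have [k Hk] := HD t (ltW t0) i j ep; exists k.
    have -> : d - k%:~R * (2 * pi) =
      (theta t i - theta t j - k%:~R * (2 * pi)) - ((theta t i - theta t j) - d) by ring.
    apply: (le_trans (ler_normB _ _)); have := Hdiff t t0 i j; rewrite -/d; lra.
  have [k1 Hk1] := Hk T1 T10.
  exists k1.
  apply: (@exp_le R _ gamma (2 * (D / mu)) mu T1 mu0) => t Tt.
  have t0 : 0 < t := lt_le_trans T10 Tt.
  have [k Hkt] := Hk t t0.
  have s1 : 2 * Eb t < pi / 2 by rewrite /Eb mulrA; exact: HT1.
  have s2 : 2 * Eb T1 < pi / 2 by rewrite /Eb mulrA; exact: HT1.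
  have kk : k = k1.
    apply: (@int_close R).
    have pp : 0 < 2 * pi :> R by rewrite mulr_gt0.
    rewrite -(ltr_pM2r pp) mul1r -{1}(gtr0_norm pp) -normrM.
    have -> : (k%:~R - k1%:~R) * (2 * pi) =
       (d - k1%:~R * (2 * pi)) - (d - k%:~R * (2 * pi)) by ring.
    apply: (le_lt_trans (ler_normB _ _)); lra.
  by move: Hkt; rewrite kk /Eb mulrA.
- exists (2 * D), mu; split => // t t0 i j; rewrite !d1 //.
  apply: (le_trans (ler_normB _ _)); have := Dnu t t0 i; have := Dnu t t0 j.
  set X := D * _; rewrite -mulrA -/X; lra.
- move=> e e0; have [T [T0 HT]] := exp_small (D / mu) mu e mu0 e0.
  exists T => t Tt; exists 0 => i; exists 0.
  rewrite mul0r subr0 addr0; apply: le_lt_trans (HL i t (lt_le_trans T0 Tt)) _.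
  exact: HT.
Qed.
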